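(* Let $\lambda_1\ge\lambda_2\ge\lambda_3>0$ and $D=\mathrm{diag}(\lambda_1,\lambda_2,\lambda_3)$. Every local minimum of $\widetilde W_{1,0}(\cdot;D)$ on $SO(3)$ is a global minimum. In contrast, there exist such $D$ for which $\widetilde W_{1,0}(\cdot;D)$ has local maxima on $SO(3)$ that are not global maxima (e.g. $\mathrm{diag}(1,-1,-1)$ when $\lambda_1>\lambda_2>\lambda_3$ and $\lambda_1-\lambda_2>2$).
   Context: $\mathrm{sym}(Y)=\tfrac12(Y+Y^T)$, $\|Y\|^2=\mathrm{tr}(Y^TY)$ (Frobenius norm). $\widetilde W_{1,0}(R;D)=\|\mathrm{sym}(R^TD-\mathbb I_3)\|^2$ for $R\in SO(3)$. *)

(* Defs.v *)
From HB Require Import structures.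
From mathcomp Require Import all_boot all_order all_algebra.
Set Implicit Arguments. Unset Strict Implicit. Unset Printing Implicit Defensive.
Import Order.TTheory GRing.Theory Num.Theory.
Local Open Scope ring_scope.

Definition symm (R : rcfType) (Y : 'M[R]_3) : 'M[R]_3 := 2^-1 *: (Y + Y^T).

Definition frob2 (R : rcfType) (Y : 'M[R]_3) : R := \tr (Y^T *m Y).

Definition SO3 (R : rcfType) (Q : 'M[R]_3) : Prop :=
  Q^T *m Q = 1%:M /\ \det Q = 1.

Definition Wt (R : rcfType) (D Q : 'M[R]_3) : R :=
  frob2 (symm (Q^T *m D - 1%:M)).

(* local / global extrema of f restricted to SO(3); neighbourhoods are
   Frobenius balls (we use the squared norm, same topology). *)
Definition SO3_local_min (R : rcfType) (f : 'M[R]_3 -> R) (Q : 'M[R]_3) : Prop :=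
  SO3 Q /\ exists eps : R, 0 < eps /\
    forall P, SO3 P -> frob2 (P - Q) < eps -> f Q <= f P.
Definition SO3_local_max (R : rcfType) (f : 'M[R]_3 -> R) (Q : 'M[R]_3) : Prop :=
  SO3 Q /\ exists eps : R, 0 < eps /\
    forall P, SO3 P -> frob2 (P - Q) < eps -> f P <= f Q.
Definition SO3_global_min (R : rcfType) (f : 'M[R]_3 -> R) (Q : 'M[R]_3) : Prop :=
  SO3 Q /\ forall P, SO3 P -> f Q <= f P.
Definition SO3_global_max (R : rcfType) (f : 'M[R]_3 -> R) (Q : 'M[R]_3) : Prop :=
  SO3 Q /\ forall P, SO3 P -> f P <= f Q.

Definition diag3 (R : rcfType) (a b c : R) : 'M[R]_3 :=
  \matrix_(i < 3, j < 3)
    (if i == j then (if val i == 0%N then a else if val i == 1%N then b else c) else 0).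

(* Main.v *)
Require Import Defs.
From HB Require Import structures.
From mathcomp Require Import all_boot all_order all_algebra.
From mathcomp Require Import ring lra.
Import Order.TTheory GRing.Theory Num.Theory.
Local Open Scope ring_scope.
Set Implicit Arguments. Unset Strict Implicit. Unset Printing Implicit Defensive.

Section S.
Context {R : rcfType}.
Definition M3 (f : nat -> nat -> R) : 'M[R]_3 := \matrix_(i < 3, j < 3) f i j.

Lemma tr_nat (f : nat -> nat -> R) : (M3 f)^T = M3 (fun i j => f j i).
Proof. by apply/matrixP => i j; rewrite /M3; rewrite !mxE. Qed.

Lemma mul_nat (f g : nat -> nat -> R) : M3 f *m M3 g =
  M3 (fun i j => f i 0%N * g 0%N j + f i 1%N * g 1%N j + f i 2%N * g 2%N j).
Proof.
apply/matrixP => i j; rewrite /M3; rewrite !mxE !big_ord_recr big_ord0 /= add0r !mxE /=.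
done.
Qed.

Lemma add_nat (f g : nat -> nat -> R) : M3 f + M3 g = M3 (fun i j => f i j + g i j).
Proof. by apply/matrixP => i j; rewrite /M3; rewrite !mxE. Qed.
Lemma opp_nat (f : nat -> nat -> R) : - M3 f = M3 (fun i j => - f i j).
Proof. by apply/matrixP => i j; rewrite /M3; rewrite !mxE. Qed.
Lemma scale_nat (c : R) (f : nat -> nat -> R) : c *: M3 f = M3 (fun i j => c * f i j).
Proof. by apply/matrixP => i j; rewrite /M3; rewrite !mxE. Qed.
Lemma one_nat : (1%:M : 'M[R]_3) = M3 (fun i j => (i == j)%:R).
Proof. by apply/matrixP => i j; rewrite /M3; rewrite !mxE. Qed.
Lemma trace_nat (f : nat -> nat -> R) : \tr (M3 f) = f 0%N 0%N + f 1%N 1%N + f 2%N 2%N.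
Proof. by rewrite /M3 /mxtrace !big_ord_recr big_ord0 /= add0r !mxE. Qed.
Definition dg (l1 l2 l3 : R) (i j : nat) : R :=
  if i == j then (if i == 0%N then l1 else if i == 1%N then l2 else l3) else 0.
Lemma diag3E (l1 l2 l3 : R) : diag3 l1 l2 l3 = M3 (dg l1 l2 l3).
Proof. by apply/matrixP => i j; rewrite /M3; rewrite !mxE. Qed.
Lemma M3_eq (f g : nat -> nat -> R) :
  f 0%N 0%N = g 0%N 0%N -> f 0%N 1%N = g 0%N 1%N -> f 0%N 2%N = g 0%N 2%N ->
  f 1%N 0%N = g 1%N 0%N -> f 1%N 1%N = g 1%N 1%N -> f 1%N 2%N = g 1%N 2%N ->
  f 2%N 0%N = g 2%N 0%N -> f 2%N 1%N = g 2%N 1%N -> f 2%N 2%N = g 2%N 2%N ->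
  M3 f = M3 g.
Proof.
move=> *; apply/matrixP => i j; rewrite /M3; rewrite !mxE.
by case: i => [[|[|[|//]]] ?]; case: j => [[|[|[|//]]] ?].
Qed.
Definition rotf (w x y z : R) (i j : nat) : R :=
 match i, j with
 | 0%N,0%N => w^+2+x^+2-y^+2-z^+2 | 0%N,1%N => 2*(x*y - w*z) | 0%N,2%N => 2*(x*z+w*y)
 | 1%N,0%N => 2*(x*y+w*z) | 1%N,1%N => w^+2-x^+2+y^+2-z^+2 | 1%N,2%N => 2*(y*z - w*x)
 | 2%N,0%N => 2*(x*z - w*y) | 2%N,1%N => 2*(y*z+w*x) | _,_ => w^+2-x^+2-y^+2+z^+2 end.
Definition qrot w x y z := M3 (rotf w x y z).
Definition Hf (l1 l2 l3 x0 x1 x2 x3 : R) : R :=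
 let n := x0+x1+x2+x3 in
 let a1 := 2*x0+2*x1-n in let a2 := 2*x0+2*x2-n in let a3 := 2*x0+2*x3-n in
 (l1^+2+l2^+2+l3^+2)/2 * n^+2 + (l1*a1+l2*a2+l3*a3)^+2/2
 - n * (l2 * l3 * a1 + l1 * l3 * a2 + l1 * l2 * a3) - 2*(l1*a1+l2*a2+l3*a3) + 3.

Lemma Wrot l1 l2 l3 w x y z :
  Wt (diag3 l1 l2 l3) (qrot w x y z) = Hf l1 l2 l3 (w^+2) (x^+2) (y^+2) (z^+2).
Proof.
rewrite /Wt /qrot /symm /frob2 diag3E one_nat.
do 3 rewrite ?tr_nat ?mul_nat ?opp_nat ?add_nat ?scale_nat.
rewrite trace_nat /= /Hf /dg /=.
by field.
Qed.
Definition cof (f : nat -> nat -> R) (i j : nat) : R :=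
 match i, j with
 | 0%N,0%N => f 1%N 1%N * f 2%N 2%N - f 1%N 2%N * f 2%N 1%N
 | 0%N,1%N => f 0%N 2%N * f 2%N 1%N - f 0%N 1%N * f 2%N 2%N
 | 0%N,2%N => f 0%N 1%N * f 1%N 2%N - f 0%N 2%N * f 1%N 1%N
 | 1%N,0%N => f 1%N 2%N * f 2%N 0%N - f 1%N 0%N * f 2%N 2%N
 | 1%N,1%N => f 0%N 0%N * f 2%N 2%N - f 0%N 2%N * f 2%N 0%N
 | 1%N,2%N => f 0%N 2%N * f 1%N 0%N - f 0%N 0%N * f 1%N 2%N
 | 2%N,0%N => f 1%N 0%N * f 2%N 1%N - f 1%N 1%N * f 2%N 0%N
 | 2%N,1%N => f 0%N 1%N * f 2%N 0%N - f 0%N 0%N * f 2%N 1%N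
 | _,_ => f 0%N 0%N * f 1%N 1%N - f 0%N 1%N * f 1%N 0%N end.

Lemma adj3 (f : nat -> nat -> R) : \adj (M3 f) = M3 (cof f).
Proof.
apply/matrixP => i j; rewrite /M3 !mxE /cofactor.
rewrite (expand_det_row _ 0) !big_ord_recr big_ord0 /= add0r /cofactor !det_mx11 !mxE /=.
case: i => [[|[|[|//]]] ?]; case: j => [[|[|[|//]]] ?]; rewrite /bump /=; ring.
Qed.

Lemma M3_inj (f g : nat -> nat -> R) : M3 f = M3 g ->
  forall a b, (a < 3)%N -> (b < 3)%N -> f a b = g a b.
Proof.
move=> h a b ha hb; have := congr1 (fun M : 'M[R]_3 => M (inord a) (inord b)) h.
by rewrite /M3 /= !mxE !inordK.
Qed.

Definition ent (M : 'M[R]_3) (a b : nat) : R := M (inord a) (inord b).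
Lemma mxnat (M : 'M[R]_3) : M = M3 (ent M).
Proof. by apply/matrixP => i j; rewrite /M3 mxE /ent !inord_val. Qed.

Lemma det3 (f : nat -> nat -> R) : \det (M3 f) =
  f 0%N 0%N * (f 1%N 1%N * f 2%N 2%N - f 1%N 2%N * f 2%N 1%N)
  - f 0%N 1%N * (f 1%N 0%N * f 2%N 2%N - f 1%N 2%N * f 2%N 0%N)
  + f 0%N 2%N * (f 1%N 0%N * f 2%N 1%N - f 1%N 1%N * f 2%N 0%N).
Proof.
rewrite /M3 (expand_det_row _ 0) !big_ord_recr big_ord0 /= add0r /cofactor.
rewrite !(expand_det_row _ 0) !big_ord_recr !big_ord0 /= !add0r /cofactor.
rewrite !det_mx11 !mxE /= /bump /=. ring.
Qed.

Lemma rotTrot w x y z : (qrot w x y z)^T *m qrot w x y z =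
  (w^+2+x^+2+y^+2+z^+2)^+2 *: 1%:M.
Proof.
rewrite /qrot tr_nat mul_nat one_nat scale_nat; apply: M3_eq; rewrite /= ?mulr1 ?mulr0; ring.
Qed.
Lemma det_rot w x y z : \det (qrot w x y z) = (w^+2+x^+2+y^+2+z^+2)^+3.
Proof. rewrite det3 /=; ring. Qed.
Lemma rot_SO3 w x y z : w^+2+x^+2+y^+2+z^+2 = 1 -> SO3 (qrot w x y z).
Proof. by move=> h; rewrite /SO3 rotTrot det_rot h !expr1n scale1r. Qed.

Lemma frob_rot w x y z w' x' y' z' :
  frob2 (qrot w x y z - qrot w' x' y' z') =
  3 * (w^+2+x^+2+y^+2+z^+2)^+2 + 3 * (w'^+2+x'^+2+y'^+2+z'^+2)^+2
  + 2 * (w^+2+x^+2+y^+2+z^+2) * (w'^+2+x'^+2+y'^+2+z'^+2)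
  - 8 * (w*w'+x*x'+y*y'+z*z')^+2.
Proof.
rewrite /frob2 /qrot opp_nat add_nat tr_nat mul_nat trace_nat /=; ring.
Qed.
Lemma Kminors (a00 a01 a02 a10 a11 a12 a20 a21 a22 : R) :
  a00*a00 + a10*a10 + a20*a20 = 1 ->
  a00*a00 + a01*a01 + a02*a02 = 1 ->
  a00*a01 + a10*a11 + a20*a21 = 0 ->
  a00*a10 + a01*a11 + a02*a12 = 0 ->
  a00*a02 + a10*a12 + a20*a22 = 0 ->
  a00*a20 + a01*a21 + a02*a22 = 0 ->
  a01*a01 + a11*a11 + a21*a21 = 1 ->
  a10*a10 + a11*a11 + a12*a12 = 1 ->
  a01*a02 + a11*a12 + a21*a22 = 0 ->
  a10*a20 + a11*a21 + a12*a22 = 0 ->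
  a02*a02 + a12*a12 + a22*a22 = 1 ->
  a20*a20 + a21*a21 + a22*a22 = 1 ->
  a11*a22 - a12*a21 = a00 ->
  a02*a21 - a01*a22 = a10 ->
  a01*a12 - a02*a11 = a20 ->
  a12*a20 - a10*a22 = a01 ->
  a00*a22 - a02*a20 = a11 ->
  a02*a10 - a00*a12 = a21 ->
  a10*a21 - a11*a20 = a02 ->
  a01*a20 - a00*a21 = a12 ->
  a00*a11 - a01*a10 = a22 ->
  (a21-a12) * (a21-a12) = (1+a00-a11-a22) * (1+a00+a11+a22) /\
  (a21-a12) * (a02-a20) = (a01+a10) * (1+a00+a11+a22) /\
  (a21-a12) * (a10-a01) = (a02+a20) * (1+a00+a11+a22) /\
  (a02-a20) * (a02-a20) = (1-a00+a11-a22) * (1+a00+a11+a22) /\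
  (a02-a20) * (a10-a01) = (a12+a21) * (1+a00+a11+a22) /\
  (a10-a01) * (a10-a01) = (1-a00-a11+a22) * (1+a00+a11+a22) /\
  (a21-a12) * (a21-a12) = (1+a00+a11+a22) * (1+a00-a11-a22) /\
  (a21-a12) * (a01+a10) = (a02-a20) * (1+a00-a11-a22) /\
  (a21-a12) * (a02+a20) = (a10-a01) * (1+a00-a11-a22) /\
  (a01+a10) * (a01+a10) = (1-a00+a11-a22) * (1+a00-a11-a22) /\
  (a01+a10) * (a02+a20) = (a12+a21) * (1+a00-a11-a22) /\
  (a02+a20) * (a02+a20) = (1-a00-a11+a22) * (1+a00-a11-a22) /\
  (a02-a20) * (a02-a20) = (1+a00+a11+a22) * (1-a00+a11-a22) /\
  (a02-a20) * (a01+a10) = (a21-a12) * (1-a00+a11-a22) /\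
  (a02-a20) * (a12+a21) = (a10-a01) * (1-a00+a11-a22) /\
  (a01+a10) * (a01+a10) = (1+a00-a11-a22) * (1-a00+a11-a22) /\
  (a01+a10) * (a12+a21) = (a02+a20) * (1-a00+a11-a22) /\
  (a12+a21) * (a12+a21) = (1-a00-a11+a22) * (1-a00+a11-a22) /\
  (a10-a01) * (a10-a01) = (1+a00+a11+a22) * (1-a00-a11+a22) /\
  (a10-a01) * (a02+a20) = (a21-a12) * (1-a00-a11+a22) /\
  (a10-a01) * (a12+a21) = (a02-a20) * (1-a00-a11+a22) /\
  (a02+a20) * (a02+a20) = (1+a00-a11-a22) * (1-a00-a11+a22) /\
  (a02+a20) * (a12+a21) = (a01+a10) * (1-a00-a11+a22) /\
  (a12+a21) * (a12+a21) = (1-a00+a11-a22) * (1-a00-a11+a22).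
Proof.
move=> h0 h1 h2 h3 h4 h5 h6 h7 h8 h9 h10 h11 h12 h13 h14 h15 h16 h17 h18 h19 h20.
by repeat split; lra.
Qed.
Definition kk (f : nat -> nat -> R) (i j : nat) : R :=
 match i, j with
 | 0%N,0%N => 1 + f 0%N 0%N + f 1%N 1%N + f 2%N 2%N
 | 1%N,1%N => 1 + f 0%N 0%N - f 1%N 1%N - f 2%N 2%N
 | 2%N,2%N => 1 - f 0%N 0%N + f 1%N 1%N - f 2%N 2%N
 | 3%N,3%N => 1 - f 0%N 0%N - f 1%N 1%N + f 2%N 2%N
 | 0%N,1%N | 1%N,0%N => f 2%N 1%N - f 1%N 2%N
 | 0%N,2%N | 2%N,0%N => f 0%N 2%N - f 2%N 0%N
 | 0%N,3%N | 3%N,0%N => f 1%N 0%N - f 0%N 1%N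
 | 1%N,2%N | 2%N,1%N => f 0%N 1%N + f 1%N 0%N
 | 1%N,3%N | 3%N,1%N => f 0%N 2%N + f 2%N 0%N
 | _,_ => f 1%N 2%N + f 2%N 1%N end.

Lemma from_prods (f : nat -> nat -> R) w x y z :
  w^+2 = kk f 0 0 / 4 -> x^+2 = kk f 1 1 / 4 -> y^+2 = kk f 2 2 / 4 -> z^+2 = kk f 3 3 / 4 ->
  x*y = kk f 1 2 / 4 -> w*z = kk f 0 3 / 4 -> x*z = kk f 1 3 / 4 -> w*y = kk f 0 2 / 4 ->
  y*z = kk f 2 3 / 4 -> w*x = kk f 0 1 / 4 ->
  w^+2+x^+2+y^+2+z^+2 = 1 /\ M3 f = qrot w x y z.
Proof.
rewrite /kk /= => *; split; first lra.
apply: M3_eq; rewrite /rotf /=; lra.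
Qed.

Lemma pq (kc ki kj kij : R) : 0 < kc -> ki * kj = kij * kc ->
  (ki / (2 * Num.sqrt kc)) * (kj / (2 * Num.sqrt kc)) = kij / 4.
Proof.
move=> h1 h2; have hs := sqr_sqrtr (ltW h1).
have s0 : Num.sqrt kc != 0 by rewrite gt_eqF // sqrtr_gt0.
rewrite -hs in h2; move: s0 h2; move: (Num.sqrt kc) => s s0 h2.
have -> : ki / (2 * s) * (kj / (2 * s)) = (ki * kj) / (4 * s^+2).
  by rewrite mulf_div expr2; congr (_ / _); ring.
rewrite h2 -mulf_div divff ?mulr1 // expf_neq0 //.
Qed.
Lemma SO3_rot (Q : 'M[R]_3) : SO3 Q ->
  exists w x y z, w^+2+x^+2+y^+2+z^+2 = 1 /\ Q = qrot w x y z.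
Proof.
case=> hO hD.
have hO2 : Q *m Q^T = 1%:M by apply: mulmx1C.
have hA : \adj Q = Q^T.
  have := mul_mx_adj Q; rewrite hD => h.
  by rewrite -[\adj Q]mul1mx -hO -mulmxA h mulmx1.
have hQ := mxnat Q; move: (ent Q) hQ => f hQ.
rewrite hQ tr_nat mul_nat one_nat in hO.
rewrite hQ tr_nat mul_nat one_nat in hO2.
rewrite hQ tr_nat adj3 in hA.
move/M3_inj: hO => hO; move/M3_inj: hO2 => hO2; move/M3_inj: hA => hA.
have o00 := hO 0 0 isT isT.
have u00 := hO2 0 0 isT isT.
have o01 := hO 0 1 isT isT.
have u01 := hO2 0 1 isT isT.
have o02 := hO 0 2 isT isT.
have u02 := hO2 0 2 isT isT.
have o11 := hO 1 1 isT isT.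
have u11 := hO2 1 1 isT isT.
have o12 := hO 1 2 isT isT.
have u12 := hO2 1 2 isT isT.
have o22 := hO 2 2 isT isT.
have u22 := hO2 2 2 isT isT.
have c00 := hA 0 0 isT isT.
have c01 := hA 0 1 isT isT.
have c02 := hA 0 2 isT isT.
have c10 := hA 1 0 isT isT.
have c11 := hA 1 1 isT isT.
have c12 := hA 1 2 isT isT.
have c20 := hA 2 0 isT isT.
have c21 := hA 2 1 isT isT.
have c22 := hA 2 2 isT isT.
rewrite /cof /= ?mulr1n ?mulr0n in o00 u00 o01 u01 o02 u02 o11 u11 o12 u12 o22 u22 c00 c01 c02 c10 c11 c12 c20 c21 c22.
have km := Kminors o00 u00 o01 u01 o02 u02 o11 u11 o12 u12 o22 u22 c00 c01 c02 c10 c11 c12 c20 c21 c22.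
clear o00 u00 o01 u01 o02 u02 o11 u11 o12 u12 o22 u22 c00 c01 c02 c10 c11 c12 c20 c21 c22 hO hO2 hA.
case: km => [m0 [m1 [m2 [m3 [m4 [m5 [m6 [m7 [m8 [m9 [m10 [m11 [m12 [m13 [m14 [m15 [m16 [m17 [m18 [m19 [m20 [m21 [m22 m23]]]]]]]]]]]]]]]]]]]]]]].
have hsum : kk f 0 0 + kk f 1 1 + kk f 2 2 + kk f 3 3 = 4 by rewrite /kk /=; lra.
rewrite hQ.
have [h0|h0] := ltrP 0 (kk f 0 0).
  exists (kk f 0 0 / (2 * Num.sqrt (kk f 0 0))), (kk f 1 0 / (2 * Num.sqrt (kk f 0 0))), (kk f 2 0 / (2 * Num.sqrt (kk f 0 0))), (kk f 3 0 / (2 * Num.sqrt (kk f 0 0))); apply: from_prods; rewrite ?expr2; apply: pq => //; rewrite /kk /=; lra.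
have [h1|h1] := ltrP 0 (kk f 1 1).
  exists (kk f 0 1 / (2 * Num.sqrt (kk f 1 1))), (kk f 1 1 / (2 * Num.sqrt (kk f 1 1))), (kk f 2 1 / (2 * Num.sqrt (kk f 1 1))), (kk f 3 1 / (2 * Num.sqrt (kk f 1 1))); apply: from_prods; rewrite ?expr2; apply: pq => //; rewrite /kk /=; lra.
have [h2|h2] := ltrP 0 (kk f 2 2).
  exists (kk f 0 2 / (2 * Num.sqrt (kk f 2 2))), (kk f 1 2 / (2 * Num.sqrt (kk f 2 2))), (kk f 2 2 / (2 * Num.sqrt (kk f 2 2))), (kk f 3 2 / (2 * Num.sqrt (kk f 2 2))); apply: from_prods; rewrite ?expr2; apply: pq => //; rewrite /kk /=; lra.
have h3 : 0 < kk f 3 3 by lra.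
exists (kk f 0 3 / (2 * Num.sqrt (kk f 3 3))), (kk f 1 3 / (2 * Num.sqrt (kk f 3 3))), (kk f 2 3 / (2 * Num.sqrt (kk f 3 3))), (kk f 3 3 / (2 * Num.sqrt (kk f 3 3))); apply: from_prods; rewrite ?expr2; apply: pq => //; rewrite /kk /=; lra.
Qed.
End S.

Section P.
Context {R : rcfType}.

Lemma Hf_1 (l1 l2 l3 x0 x1 x2 x3 : R) : x0+x1+x2+x3 = 1 ->
  Hf l1 l2 l3 x0 x1 x2 x3 =
  let a1 := 2*x0+2*x1-1 in let a2 := 2*x0+2*x2-1 in let a3 := 2*x0+2*x3-1 in
  (l1^+2+l2^+2+l3^+2)/2 + (l1*a1+l2*a2+l3*a3)^+2/2
  - (l2 * l3 * a1 + l1 * l3 * a2 + l1 * l2 * a3) - 2*(l1*a1+l2*a2+l3*a3) + 3.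
Proof. move=> h; rewrite /Hf; cbv zeta; rewrite h; ring. Qed.

Lemma Hf_conv (l1 l2 l3 x0 x1 x2 x3 y0 y1 y2 y3 t : R) :
  x0+x1+x2+x3 = 1 -> y0+y1+y2+y3 = 1 -> 0 <= t -> t <= 1 ->
  Hf l1 l2 l3 ((1-t)*x0+t*y0) ((1-t)*x1+t*y1) ((1-t)*x2+t*y2) ((1-t)*x3+t*y3)
  <= (1-t) * Hf l1 l2 l3 x0 x1 x2 x3 + t * Hf l1 l2 l3 y0 y1 y2 y3.
Proof.
move=> hx hy t0 t1.
have hz : (1-t)*x0+t*y0 + ((1-t)*x1+t*y1) + ((1-t)*x2+t*y2) + ((1-t)*x3+t*y3) = 1.
  have -> : (1-t)*x0+t*y0 + ((1-t)*x1+t*y1) + ((1-t)*x2+t*y2) + ((1-t)*x3+t*y3)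
    = (1-t)*(x0+x1+x2+x3) + t*(y0+y1+y2+y3) by ring.
  by rewrite hx hy; ring.
rewrite !Hf_1 //=.
set L := (l1 * (2 * x0 + 2 * x1 - 1) + l2 * (2 * x0 + 2 * x2 - 1) + l3 * (2 * x0 + 2 * x3 - 1))
       - (l1 * (2 * y0 + 2 * y1 - 1) + l2 * (2 * y0 + 2 * y2 - 1) + l3 * (2 * y0 + 2 * y3 - 1)).
rewrite -subr_ge0.
have hL : 0 <= t * (1 - t) / 2 * L ^+ 2.
  have ht : 0 <= t * (1 - t) / 2 by nra.
  exact: mulr_ge0 ht (sqr_ge0 L).
apply: (le_trans hL); rewrite le_eqVlt; apply/orP; left; apply/eqP; rewrite /L; ring.
Qed.
Lemma sq_close (a s t v : R) : 0 <= a -> 0 <= s -> s^+2 = (1-t)*a^+2 + t * v ->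
  0 <= t -> 0 <= v -> (a - s)^+2 <= t*(a^+2+v).
Proof. move=> ha hs e ht hv; case: (lerP s a) => h; nra. Qed.

Definition rr (t q p : R) : R :=
  if 0 <= q then Num.sqrt ((1-t)*q^+2+t * p^+2) else - Num.sqrt ((1-t)*q^+2+t * p^+2).

Lemma compo (t q p : R) : 0 <= t -> t <= 1 ->
  (rr t q p)^+2 = (1-t)*q^+2+t * p^+2 /\ 0 <= q * rr t q p /\
  (q - rr t q p)^+2 <= t*(q^+2+p^+2).
Proof.
move=> h0 h1; rewrite /rr.
have hu : 0 <= (1-t)*q^+2 + t * p^+2.
  have := sqr_ge0 q; have := sqr_ge0 p; nra.
have hs := sqrtr_ge0 ((1-t)*q^+2 + t * p^+2).
have hs2 := sqr_sqrtr hu.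
move: hs hs2; move: (Num.sqrt _) => s hs hs2.
case: ifP => hq.
  split=> //; split; first exact: mulr_ge0.
  by apply: sq_close => //; exact: sqr_ge0.
have hq' : 0 <= - q by move/negbT: hq; rewrite -ltNge; lra.
rewrite sqrrN; split=> //; split; first nra.
have -> : q - - s = - (- q - s) by ring.
rewrite sqrrN -[q^+2]sqrrN; apply: sq_close => //; first by rewrite sqrrN.
exact: sqr_ge0.
Qed.
Lemma part1 (l1 l2 l3 : R) (Q : 'M[R]_3) :
  SO3_local_min (Wt (diag3 l1 l2 l3)) Q -> SO3_global_min (Wt (diag3 l1 l2 l3)) Q.
Proof.
case=> hQ [eps [he hloc]]; split=> // P hP.
case: (SO3_rot hQ) => w [x [y [z [hq eQ]]]]; subst Q.
case: (SO3_rot hP) => w' [x' [y' [z' [hp eP]]]]; subst P.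
set t := Num.min (1/2) (eps/32).
have t0 : 0 < t by rewrite lt_min; apply/andP; split; lra.
have t1 : t <= 1/2 by rewrite ge_min lexx.
have t2 : t <= eps/32 by rewrite ge_min lexx orbT.
have t0' : 0 <= t by lra.
have t1' : t <= 1 by lra.
have [a1 [b1 c1]] := compo w w' t0' t1'.
have [a2 [b2 c2]] := compo x x' t0' t1'.
have [a3 [b3 c3]] := compo y y' t0' t1'.
have [a4 [b4 c4]] := compo z z' t0' t1'.
move: a1 b1 c1 a2 b2 c2 a3 b3 c3 a4 b4 c4.
move: (rr t w w') (rr t x x') (rr t y y') (rr t z z') => rw rx ry rz a1 b1 c1 a2 b2 c2 a3 b3 c3 a4 b4 c4.
have hr : rw^+2 + rx^+2 + ry^+2 + rz^+2 = 1.
  rewrite a1 a2 a3 a4.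
  have -> : (1 - t) * w ^+ 2 + t * w' ^+ 2 + ((1 - t) * x ^+ 2 + t * x' ^+ 2) +
    ((1 - t) * y ^+ 2 + t * y' ^+ 2) + ((1 - t) * z ^+ 2 + t * z' ^+ 2) =
    (1-t) * (w^+2+x^+2+y^+2+z^+2) + t * (w'^+2+x'^+2+y'^+2+z'^+2) by ring.
  by rewrite hq hp; ring.
have hd : frob2 (qrot rw rx ry rz - qrot w x y z) < eps.
  rewrite frob_rot hr hq.
  set d := rw * w + rx * x + ry * y + rz * z.
  have d0 : 0 <= d by rewrite /d; lra.
  have hsq : (w - rw)^+2 + (x - rx)^+2 + (y - ry)^+2 + (z - rz)^+2 = 2 - 2 * d.
    have -> : (w - rw)^+2 + (x - rx)^+2 + (y - ry)^+2 + (z - rz)^+2 =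
      (w^+2+x^+2+y^+2+z^+2) + (rw^+2 + rx^+2 + ry^+2 + rz^+2) - 2 * d by rewrite /d; ring.
    by rewrite hq hr.
  have hs : t * (w ^+ 2 + w' ^+ 2) + t * (x ^+ 2 + x' ^+ 2) + t * (y ^+ 2 + y' ^+ 2)
     + t * (z ^+ 2 + z' ^+ 2) = 2 * t.
    have -> : t * (w ^+ 2 + w' ^+ 2) + t * (x ^+ 2 + x' ^+ 2) + t * (y ^+ 2 + y' ^+ 2)
     + t * (z ^+ 2 + z' ^+ 2) = t * (w^+2+x^+2+y^+2+z^+2) + t * (w'^+2+x'^+2+y'^+2+z'^+2)
      by ring.
    by rewrite hq hp; ring.
  have h1 : 1 - d <= t by lra.
  have h2 : 0 <= 1 - d.
    have := sqr_ge0 (w - rw); have := sqr_ge0 (x - rx);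
    have := sqr_ge0 (y - ry); have := sqr_ge0 (z - rz); lra.
  rewrite !expr1n; nra.
have := hloc _ (rot_SO3 hr) hd.
rewrite !Wrot a1 a2 a3 a4 => hmin.
have hc := Hf_conv l1 l2 l3 hq hp t0' t1'.
have : t * Hf l1 l2 l3 (w ^+ 2) (x ^+ 2) (y ^+ 2) (z ^+ 2) <=
       t * Hf l1 l2 l3 (w' ^+ 2) (x' ^+ 2) (y' ^+ 2) (z' ^+ 2) by lra.
by rewrite ler_pM2l.
Qed.
Lemma Hdiff (l1 l2 l3 x0 x1 x2 x3 : R) : x0+x1+x2+x3 = 1 ->
  Hf l1 l2 l3 x0 x1 x2 x3 - Hf l1 l2 l3 (0^+2) (1^+2) (0^+2) (0^+2) =
  -2*((l2+l3)^+2+2*(l2+l3)) * x0 + 2*(l1-l2)*(2-(l1-l2)) * x2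
  + 2*(l1-l3)*(2-(l1-l3)) * x3 + 2 * (x0*(l2+l3) + x2*(l2-l1) + x3*(l3-l1))^+2.
Proof.
move=> h; rewrite Hf_1 // Hf_1; last by ring.
have -> : x1 = 1 - x0 - x2 - x3 by lra.
rewrite /=; by field.
Qed.

Lemma He3 (l1 l2 l3 : R) :
  Hf l1 l2 l3 (0^+2) (0^+2) (0^+2) (1^+2) - Hf l1 l2 l3 (0^+2) (1^+2) (0^+2) (0^+2)
  = 4 * (l1 - l3).
Proof. rewrite Hf_1; last by ring. rewrite Hf_1; last by ring. rewrite /=; by field. Qed.

Lemma part2 (l1 l2 l3 : R) :
  l2 < l1 -> l3 < l2 -> 0 < l3 -> 2 < l1 - l2 ->
  SO3_local_max (Wt (diag3 l1 l2 l3)) (diag3 1 (-1) (-1)) /\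
  ~ SO3_global_max (Wt (diag3 l1 l2 l3)) (diag3 1 (-1) (-1)).
Proof.
move=> h12 h23 h3 hgap.
have e1 : diag3 1 (-1) (-1) = qrot 0 1 0 0 :> 'M[R]_3.
  rewrite diag3E /qrot; apply: M3_eq; rewrite /dg /rotf /=; ring.
have e3 : diag3 (-1) (-1) 1 = qrot 0 0 0 1 :> 'M[R]_3.
  rewrite diag3E /qrot; apply: M3_eq; rewrite /dg /rotf /=; ring.
have u1 : 0^+2+1^+2+0^+2+0^+2 = 1 :> R by ring.
have u3 : 0^+2+0^+2+0^+2+1^+2 = 1 :> R by ring.
rewrite e1; split; last first.
  case=> _ hmax; have := hmax _ (rot_SO3 u3); rewrite !Wrot.
  have := He3 l1 l2 l3; lra.
split; first exact: rot_SO3 u1.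
set c0 := -2*((l2+l3)^+2+2*(l2+l3)).
set c2 := 2*(l1-l2)*(2-(l1-l2)).
set c3 := 2*(l1-l3)*(2-(l1-l3)).
set m := Num.min (-c0) (Num.min (-c2) (-c3)).
set M := l1 + l2 + l3.
have hc0 : 0 < -c0 by rewrite /c0; nra.
have hc2 : 0 < -c2 by rewrite /c2; nra.
have hc3 : 0 < -c3 by rewrite /c3; nra.
have m0 : 0 < m by rewrite /m !lt_min hc0 hc2 hc3.
have mc0 : m <= -c0 by rewrite /m ge_min lexx.
have mc2 : m <= -c2 by rewrite /m !ge_min lexx orbT.
have mc3 : m <= -c3 by rewrite /m !ge_min lexx !orbT.
have hM : 0 < M ^+ 2 by rewrite exprn_gt0 // /M; lra.
exists (4 * m / M ^+ 2); split; first by rewrite divr_gt0 //; lra.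
move=> P hP hd.
case: (SO3_rot hP) => w [x [y [z [hp eP]]]]; subst P.
rewrite frob_rot hp u1 ltr_pdivlMr // in hd.
rewrite !Wrot -subr_le0 Hdiff //.
have hx : x^+2 = 1 - w^+2 - y^+2 - z^+2 by lra.
have := sqr_ge0 w; have := sqr_ge0 y; have := sqr_ge0 z.
rewrite (_ : w * 0 + x * 1 + y * 0 + z * 0 = x) in hd; last by ring.
rewrite hx -/c0 -/c2 -/c3 in hd *.
move: hd; move: (w^+2) (y^+2) (z^+2) => a b c hd hc hb ha.
set s := a + b + c.
have hs : 2 * M^+2 * s <= m by rewrite /s; nra.
have hlin : c0 * a + c2 * b + c3 * c <= - m * s by rewrite /s; nra.
set u := a * (l2 + l3) + b * (l2 - l1) + c * (l3 - l1).
have hu1 : u <= M * s by rewrite /u /s /M; nra.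
have hu2 : - u <= M * s by rewrite /u /s /M; nra.
have hu : u ^+ 2 <= M^+2 * s^+2 by nra.
have s0 : 0 <= s by rewrite /s; lra.
nra.
Qed.
End P.

Theorem mainTheorem13 :
  (forall (R : rcfType) (l1 l2 l3 : R) (Q : 'M[R]_3),
      l2 <= l1 -> l3 <= l2 -> 0 < l3 ->
      SO3_local_min (Wt (diag3 l1 l2 l3)) Q ->
      SO3_global_min (Wt (diag3 l1 l2 l3)) Q)
  /\
  (forall (R : rcfType) (l1 l2 l3 : R),
      l2 < l1 -> l3 < l2 -> 0 < l3 -> 2 < l1 - l2 ->
      SO3_local_max (Wt (diag3 l1 l2 l3)) (diag3 1 (-1) (-1)) /\
      ~ SO3_global_max (Wt (diag3 l1 l2 l3)) (diag3 1 (-1) (-1))).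
Proof.
split.
  by move=> R l1 l2 l3 Q _ _ _; exact: part1.
by move=> R l1 l2 l3; exact: part2.
Qed.
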